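(* Let $c_1,c_2$ be arbitrary real constants and $\varepsilon,\delta\in\{1,-1\}$. Each of the following functions is an exact solution of the equation $u_t+(u_x+u_{xx})^2=0$ on $\mathbb{R}^2$: (1) $u=c_1+c_2e^{-x}$; (2) $u=c_1-\varepsilon(x+\varepsilon t)+4\delta c_2e^{-\frac12(x+\varepsilon t)}+\varepsilon c_2^2e^{-(x+\varepsilon t)}$; (3) $u=c_1+4\delta e^{-\frac x2}-(t+c_2)e^{-x}$; (4) $u=c_1+c_2e^{-x}+\delta x-t$; (5) $u=c_1+\varepsilon t+\frac{1}{2k}\left(\delta\sqrt{1-4\varepsilon k^2}-1\right)\left(x+\frac1k t\right)$, where $k\neq 0$ if $\varepsilon=-1$, and $0<|k|\le\frac12$ if $\varepsilon=1$. *)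

(* Defs.v *)
From Stdlib Require Export Reals.
From Coquelicot Require Export Coquelicot.
Open Scope R_scope.

Definition is_solution (u : R -> R -> R) : Prop :=
  forall x t : R,
    ex_derive (fun s => u x s) t /\
    ex_derive (fun y => u y t) x /\
    ex_derive (fun y => Derive (fun z => u z t) y) x /\
    Derive (fun s => u x s) t
      + (Derive (fun y => u y t) x
         + Derive (fun y => Derive (fun z => u z t) y) x) ^ 2 = 0.

(* Main.v *)
Require Import Defs.
From Stdlib Require Import Lra.

Lemma sol_of (u ut ux uxx : R -> R -> R) :
  (forall x t, is_derive (fun s => u x s) t (ut x t)) ->
  (forall x t, is_derive (fun y => u y t) x (ux x t)) ->
  (forall x t, is_derive (fun y => ux y t) x (uxx x t)) ->
  (forall x t, ut x t + (ux x t + uxx x t)^2 = 0) -> is_solution u.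
Proof.
  intros H1 H2 H3 H4 x t.
  assert (E : forall x, Derive (fun y => u y t) x = ux x t)
    by (intro; apply is_derive_unique; apply H2).
  assert (E2 : Derive (fun y => Derive (fun z => u z t) y) x = uxx x t).
  { transitivity (Derive (fun y => ux y t) x). apply Derive_ext; exact E. apply is_derive_unique, H3. }
  repeat split.
  - eexists; apply H1.
  - eexists; apply H2.
  - eapply ex_derive_ext. intro; symmetry; apply E. eexists; apply H3.
  - rewrite E2, E. replace (Derive (fun s => u x s) t) with (ut x t) by (symmetry; apply is_derive_unique, H1). apply H4.
Qed.

Lemma exp_half z : exp (- (1/2) * z) ^ 2 = exp (- z).
Proof. simpl. rewrite Rmult_1_r, <- exp_plus. f_equal. lra. Qed.

Lemma exp_half2 x : exp (- (x/2)) ^ 2 = exp (- x).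
Proof. simpl. rewrite Rmult_1_r, <- exp_plus. f_equal. lra. Qed.

Theorem mainTheorem4 :
  forall (c1 c2 eps delta : R),
    (eps = 1 \/ eps = -1) -> (delta = 1 \/ delta = -1) ->
    is_solution (fun x t => c1 + c2 * exp (- x))
    /\ is_solution (fun x t =>
         c1 - eps * (x + eps * t)
         + 4 * delta * c2 * exp (- (1/2) * (x + eps * t))
         + eps * c2 ^ 2 * exp (- (x + eps * t)))
    /\ is_solution (fun x t =>
         c1 + 4 * delta * exp (- (x / 2)) - (t + c2) * exp (- x))
    /\ is_solution (fun x t => c1 + c2 * exp (- x) + delta * x - t)
    /\ (forall k : R,
          (eps = -1 -> k <> 0) ->
          (eps = 1 -> 0 < Rabs k <= 1/2) ->
          is_solution (fun x t =>
            c1 + eps * t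
            + 1 / (2 * k) * (delta * sqrt (1 - 4 * eps * k ^ 2) - 1)
              * (x + 1 / k * t))).
Proof.
  intros c1 c2 eps delta He Hd.
  assert (He2 : eps * eps = 1) by (destruct He; subst; lra).
  assert (Hd2 : delta * delta = 1) by (destruct Hd; subst; lra).
  split; [|split; [|split; [|split]]].
  - apply (sol_of _ (fun _ _ => 0) (fun x _ => - c2 * exp (-x))
                    (fun x _ => c2 * exp (-x))).
    + intros; auto_derive; auto; ring.
    + intros; auto_derive; auto; ring.
    + intros; auto_derive; auto; ring.
    + intros; simpl; ring.
  - apply (sol_of _
      (fun x t => eps * (-eps - 2*delta*c2*exp (- (1/2) * (x + eps * t)) - eps*c2^2*exp (- (x + eps * t))))
      (fun x t => -eps - 2*delta*c2*exp (- (1/2) * (x + eps * t)) - eps*c2^2*exp (- (x + eps * t)))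
      (fun x t => delta*c2*exp (- (1/2) * (x + eps * t)) + eps*c2^2*exp (- (x + eps * t))));
    try (intros; auto_derive; auto; field).

    intros x t; rewrite <- exp_half.
    destruct He as [E|E], Hd as [D|D]; rewrite E, D; field.
  - apply (sol_of _ (fun x _ => - exp (-x))
      (fun x t => -2*delta*exp(-(x/2)) + (t+c2)*exp(-x))
      (fun x t => delta*exp(-(x/2)) - (t+c2)*exp(-x))).
    + intros; auto_derive; auto; ring.
    + intros; auto_derive; auto; unfold Rdiv; field.
    + intros; auto_derive; auto; unfold Rdiv; field.
    + intros x t. rewrite <- exp_half2.
      replace (-2 * delta * exp (- (x / 2)) + (t + c2) * exp (- x) +
        (delta * exp (- (x / 2)) - (t + c2) * exp (- x)))
      with (- delta * exp (- (x/2))) by ring.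
      ring_simplify. replace (delta^2) with 1 by (simpl; lra). ring.
  - apply (sol_of _ (fun _ _ => -1) (fun x _ => - c2 * exp (-x) + delta)
                    (fun x _ => c2 * exp (-x))).
    + intros; auto_derive; auto; ring.
    + intros; auto_derive; auto; ring.
    + intros; auto_derive; auto; ring.
    + intros; simpl. ring_simplify. nra.
  - intros k Hk1 Hk2.
    assert (k0 : k <> 0).
    { destruct He as [E|E]. specialize (Hk2 E). intro; subst; rewrite Rabs_R0 in Hk2; lra. auto. }
    assert (Hs : 0 <= 1 - 4 * eps * k ^ 2).
    { destruct He as [E|E]; subst.
      - specialize (Hk2 eq_refl). assert (Rabs k * Rabs k <= 1/4) by nra.
        rewrite <- Rabs_mult in H. assert (k*k <= 1/4) by (pose proof (Rle_abs (k*k)); lra).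
        simpl; lra.
      - simpl; nra. }
    set (s := sqrt (1 - 4 * eps * k ^ 2)).
    assert (Hss : s * s = 1 - 4 * eps * k ^ 2) by (apply sqrt_sqrt; auto).
    set (a := 1 / (2 * k) * (delta * s - 1)).
    apply (sol_of _ (fun _ _ => eps + a * (1/k)) (fun _ _ => a) (fun _ _ => 0)).
    + intros; auto_derive; auto; ring.
    + intros; auto_derive; auto; ring.
    + intros; auto_derive; auto; ring.
    + intros; unfold a. field_simplify; auto.
      replace (delta ^ 2) with 1 by (simpl; lra).
      replace (s ^ 2) with (s*s) by ring. rewrite Hss. field.
exact k0. Qed.
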